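(* Let $\mathcal{A}'\subsetneq\mathcal{A}$ be finite alphabets, $\Omega$ a prefix extension from $\mathcal{A}'$ to $\mathcal{A}$ given by words $\{\omega_{\varepsilon,b}\}_{\varepsilon\in\{0,1\},b\in\mathcal{A}'}$, and $\mathbf{p}=(p_0,p_1)$ an irreducible pair on $\mathcal{A}'$ with $a_\varepsilon=p_\varepsilon^{-1}(1)$. Then $\Omega(\mathbf{p})$ is irreducible if and only if there is no $k>0$ such that the first $k$ letters of $\omega_{0,a_0}$ and the first $k$ letters of $\omega_{1,a_1}$ form the same set.
   Context: A pair on an alphabet $\mathcal{B}$ with $m=\#\mathcal{B}$ is $(q_0,q_1)$ with $q_0,q_1:\mathcal{B}\to\{1,\dots,m\}$ bijections; row $\varepsilon$ is the word $q_\varepsilon^{-1}(1)\cdots q_\varepsilon^{-1}(m)$. It is irreducible if $q_0^{-1}\{1,\dots,k\}\ne q_1^{-1}\{1,\dots,k\}$ for all $1\le k<m$. A word is an ordered collection of distinct letters. A prefix extension from $\mathcal{A}'$ to $\mathcal{A}$ is a choice of words $\omega_{\varepsilon,b}$ ($\varepsilon\in\{0,1\}$, $b\in\mathcal{A}'$) such that: each $\omega_{\varepsilon,b}=u\,b$ with $u$ a possibly empty word in letters of $\mathcal{A}\setminus\mathcal{A}'$; for each $\varepsilon$, every letter of $\mathcal{A}$ appears in some $\omega_{\varepsilon,b}$; and for each $\varepsilon$ and $b\ne c$, $\omega_{\varepsilon,b}$ and $\omega_{\varepsilon,c}$ share no letter. For a pair $\mathbf{p}$ on $\mathcal{A}'$,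 $\Omega(\mathbf{p})$ is the pair on $\mathcal{A}$ whose row $\varepsilon$ is obtained from row $\varepsilon$ of $\mathbf{p}$ by replacing each letter $b$ by the word $\omega_{\varepsilon,b}$. *)

(* Defs.v *)
From mathcomp Require Import all_boot.
Set Implicit Arguments. Unset Strict Implicit. Unset Printing Implicit Defensive.

Section Pairs.
Variable T : finType.

(* A pair (q0,q1) on the alphabet B is represented by its two rows
   (row e = q_e^{-1}(1) ... q_e^{-1}(m)); each row is a word (distinct
   letters) whose set of letters is exactly B.  Row 0 is indexed by
   [false], row 1 by [true]. *)
Definition is_pair (B : {set T}) (r0 r1 : seq T) : Prop :=
  [/\ uniq r0, uniq r1, [set x in r0] = B & [set x in r1] = B].

Definition irreducible_pair (B : {set T}) (r0 r1 : seq T) : Prop :=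
  forall k : nat, 1 <= k -> k < #|B| ->
    [set x in take k r0] <> [set x in take k r1].

Definition prefix_extension (A' A : {set T}) (omega : bool -> T -> seq T)
  : Prop :=
  [/\ (forall (e : bool) (b : T), b \in A' ->
         exists u : seq T,
           [/\ omega e b = rcons u b, uniq u & {subset u <= A :\: A'}]),
      (forall (e : bool) (x : T), x \in A ->
         exists2 b, b \in A' & x \in omega e b)
    & (forall (e : bool) (b c : T), b \in A' -> c \in A' -> b != c ->
         [disjoint omega e b & omega e c])].

Definition Omega_row (omega : bool -> T -> seq T) (e : bool) (r : seq T)
  : seq T := flatten [seq omega e b | b <- r].

End Pairs.

(* Main.v *)
Require Import Defs.
From mathcomp Require Import all_boot.
From mathcomp Require Import zify.

Lemma blocks (T : finType) (A' A : {set T}) (W : T -> seq T)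
 (HW : forall b, b \in A' -> exists u, [/\ W b = rcons u b, uniq u & {subset u <= A :\: A'}])
 (r : seq T) (k : nat) : {subset r <= A'} ->
 exists j, [/\ j <= size r,
   [set x in take k (flatten [seq W b | b <- r])] :&: A' = [set x in take j r],
   (j = size r -> size (flatten [seq W b | b <- r]) <= k)
 & (forall b s, r = b :: s -> j = 0 -> k < size (W b))].
Proof.
elim: r k => [|b s IH] k Hr.
  exists 0; split => //=.
  by apply/setP=> x; rewrite !inE.
have Hb: b \in A' by apply Hr; rewrite mem_head.
have Hs: {subset s <= A'} by move=> x Hx; apply Hr; rewrite inE Hx orbT.
have [u [Wb Hu HuA]] := HW b Hb.
rewrite /=.
case: (ltnP k (size (W b))) => Hk.
  exists 0; split => //.
  - rewrite take_cat Hk take0; apply/setP => x; rewrite !inE.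
    apply/negbTE/andP => -[Hx HxA].
    move: Hx; rewrite Wb -cats1 takel_cat; last by move: Hk; rewrite Wb size_rcons.
    move/mem_take/HuA; by rewrite inE HxA.
  - by move=> b' s' [<- _].
have [j [Hj Hset Hfull H0]] := IH (k - size (W b)) Hs.
exists j.+1; split => //.
- rewrite take_cat ltnNge Hk /=; apply/setP=> x; move/setP: Hset => /(_ x).
  rewrite !inE mem_cat andb_orl => <-; congr (_ || _).
  rewrite Wb mem_rcons inE; case: eqP => [->|ne] //=.
  apply/negbTE/andP => -[/HuA]; rewrite inE => /andP[/negbTE -> _] //.
- move=> [] /Hfull; rewrite size_cat; lia.
Qed.

Lemma card_take (T : finType) (r : seq T) j : uniq r -> j <= size r ->
  #|[set x in take j r]| = j.
Proof.
move=> u Hj; rewrite cardsE (card_uniqP _) ?take_uniq //; exact: size_takel.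
Qed.

Theorem lemma2p24 (T : finType) (A' A : {set T})
  (omega : bool -> T -> seq T) (r0 r1 : seq T) (a0 a1 : T) :
  A' \proper A ->
  prefix_extension A' A omega ->
  is_pair A' r0 r1 ->
  irreducible_pair A' r0 r1 ->
  ohead r0 = Some a0 -> ohead r1 = Some a1 ->
  (irreducible_pair A (Omega_row omega false r0) (Omega_row omega true r1) <->
   ~ (exists k : nat,
        [/\ 0 < k, k <= size (omega false a0), k <= size (omega true a1)
          & [set x in take k (omega false a0)] =
            [set x in take k (omega true a1)]])).
Proof.
move=> HAA [Hpre Hcov Hdis] [u0 u1 S0 S1] Hirr Ha0 Ha1.
have [s0 Er0] : exists s0, r0 = a0 :: s0 by case: r0 Ha0 {S0 u0 Hirr} => //= ? s [<-]; exists s.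
have [s1 Er1] : exists s1, r1 = a1 :: s1 by case: r1 Ha1 {S1 u1 Hirr} => //= ? s [<-]; exists s.
have sub0 : {subset r0 <= A'} by move=> x Hx; rewrite -S0 inE.
have sub1 : {subset r1 <= A'} by move=> x Hx; rewrite -S1 inE.
have a0A : a0 \in A' by apply: sub0; rewrite Er0 mem_head.
have a1A : a1 \in A' by apply: sub1; rewrite Er1 mem_head.
have c0 : #|A'| = size r0 by rewrite -S0 cardsE (card_uniqP u0).
have c1 : #|A'| = size r1 by rewrite -S1 cardsE (card_uniqP u1).
have cA : #|A'| < #|A| := proper_card HAA.
have cA' : 0 < #|A'| by rewrite c0 Er0.
have Ar0 : forall k, k <= size (omega false a0) ->
   take k (Omega_row omega false r0) = take k (omega false a0).
  by move=> k Hk; rewrite /Omega_row Er0 /= takel_cat.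
have Ar1 : forall k, k <= size (omega true a1) ->
   take k (Omega_row omega true r1) = take k (omega true a1).
  by move=> k Hk; rewrite /Omega_row Er1 /= takel_cat.
split.
- move=> Hirr' [k [k0 kle0 kle1 Hk]].
  case: (ltnP k #|A|) => kA.
    by apply: (Hirr' k k0 kA); rewrite Ar0 // Ar1.
  have [v0 [W0 uv0 sv0]] := Hpre false a0 a0A.
  have [v1 [W1 uv1 sv1]] := Hpre true a1 a1A.
  have a0v0 : a0 \notin v0 by apply/negP => /sv0; rewrite inE a0A.
  have a1v1 : a1 \notin v1 by apply/negP => /sv1; rewrite inE a1A.
  have szle : forall v a, a \in A' -> {subset v <= A :\: A'} -> a \notin v -> uniq v ->
     size (rcons v a) <= #|A|.
    move=> v a aA sv av uv.
    have uva : uniq (rcons v a) by rewrite rcons_uniq av uv.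
    rewrite -(card_uniqP uva).
    rewrite -cardsE; apply: subset_leq_card; apply/subsetP => x; rewrite inE mem_rcons inE.
    case/orP => [/eqP ->|/sv]; last by rewrite inE => /andP[].
    by apply: (subsetP (proper_sub HAA)).
  have e0 := szle _ _ a0A sv0 a0v0 uv0.
  have e1 := szle _ _ a1A sv1 a1v1 uv1.
  rewrite W0 in kle0 e0 Hk Ar0; rewrite W1 in kle1 e1 Hk Ar1.
  have k0e : k = size (rcons v0 a0) by apply/eqP; rewrite eqn_leq kle0 (leq_trans e0 kA).
  have k1e : k = size (rcons v1 a1) by apply/eqP; rewrite eqn_leq kle1 (leq_trans e1 kA).
  rewrite {1}k0e {1}k1e !take_size in Hk.
  have ea : a0 = a1.
    move/setP: Hk => /(_ a0); rewrite !inE !mem_rcons !inE eqxx /=.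
    move/esym; case/orP => [/eqP //|/sv1]; by rewrite inE a0A.
  subst a1.
  have sz : size v0 = size v1 by move: k0e k1e; rewrite !size_rcons; lia.
  apply: (Hirr' (size v0)).
  + have A2 : 1 < k := leq_trans (leq_ltn_trans cA' cA) kA.
    move: k0e A2; rewrite size_rcons; lia.
  + by move: e0; rewrite size_rcons.
  + rewrite /Omega_row Er0 Er1 /= W0 W1 -!cats1 -!catA take_size_cat //.
    rewrite take_size_cat //; apply/setP => x; move/setP: Hk => /(_ x).
    rewrite !inE !mem_rcons !inE; case: eqP => [->|] //= _.
    by rewrite (negbTE a0v0) (negbTE a1v1).
- move=> Hnot k k1 kA Heq.
  have [j0 [Hj0 Hs0 Hf0 Hz0]] := @blocks T A' A (omega false) (Hpre false) r0 k sub0.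
  have [j1 [Hj1 Hs1 Hf1 Hz1]] := @blocks T A' A (omega true) (Hpre true) r1 k sub1.
  have Hse : [set x in take j0 r0] = [set x in take j1 r1].
    by rewrite -Hs0 -Hs1 -/(Omega_row omega false r0) -/(Omega_row omega true r1) Heq.
  have ej : j0 = j1 by rewrite -(card_take _ _ _ u0 Hj0) -(card_take _ _ _ u1 Hj1) Hse.
  subst j1.
  case: (posnP j0) => jp.
    have l0 := Hz0 _ _ Er0 jp; have l1 := Hz1 _ _ Er1 jp.
    apply: Hnot; exists k; split => //; try exact: ltnW.
    by rewrite -Ar0 ?(ltnW l0) // -Ar1 ?(ltnW l1).
  case: (ltnP j0 #|A'|) => jA.
    exact: (Hirr j0 jp jA Hse).
  have jf : j0 = size r0 by lia.
  have := Hf0 jf; rewrite -/(Omega_row omega false r0) => Hsz.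
  move: Heq; rewrite (take_oversize Hsz) => Heq.
  have : A \subset [set x in take k (Omega_row omega true r1)].
    rewrite -Heq; apply/subsetP => x /(Hcov false) [b bA xb]; rewrite inE.
    apply/flatten_mapP; exists b => //; by rewrite -S0 inE in bA.
  move/subset_leq_card; rewrite cardsE => H.
  have := leq_trans H (card_size _); rewrite size_take; case: ltnP; lia.
Qed.
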